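(* Let $\mathcal{S}$ be a finite subset of $\overline{\mathbb{M}}$. Then there is an integer $e_0$ such that $\Delta^{(m)}_e(\mathcal{S})\subseteq\Delta^{(m)}_e(\phi(\mathcal{S}))$ for all $e\ge e_0$.
   Context: $q$ is a prime power, $m$ a positive integer. A monomial $\mu\neq1$ in $x_0,\dots,x_m$ written $x_0^{a_0}\cdots x_k^{a_k}$ with $a_k>0$ is projectively reduced if $a_0,\dots,a_{k-1}\le q-1$; $1$ is projectively reduced. $\overline{\mathbb{M}}$ is the set of projectively reduced monomials, $\overline{\mathbb{M}}_e$ those of degree $e$, and $\overline{\mathbb{M}}^{(m)}_e=\{x_0^{a_0}\cdots x_m^{a_m}\in\overline{\mathbb{M}}_e:a_m>0\}$. For a set $\mathcal{S}$ of monomials, $\Delta_e(\mathcal{S})=\{\mu\in\overline{\mathbb{M}}_e:\text{no }\nu\in\mathcal{S}\text{ divides }\mu\}$ and $\Delta^{(m)}_e(\mathcal{S})=\Delta_e(\mathcal{S})\cap\overline{\mathbb{M}}^{(m)}_e$. Given $\mathcal{S}\subseteq\overline{\mathbb{M}}$, for $\mu=x_0^{i_0}\cdots x_m^{i_m}\in\mathcal{S}$ set $\phi(\mu)=\mu x_{m-1}/x_m$ if $x_0^{i_0}\cdots x_{m-2}^{i_{m-2}}x_{m-1}^{i_{m-1}+i_m}\notin\mathcal{S}$ and $i_{m-1}+1<q$, and $\phi(\mu)=\mu$ otherwise; $\phi(\mathcal{S})$ is the image. *)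

(* Defs.v *)
From mathcomp Require Import all_boot.
Set Implicit Arguments. Unset Strict Implicit. Unset Printing Implicit Defensive.

(* A monomial x_0^{a_0} ... x_m^{a_m} in the m+1 variables x_0,...,x_m,
   represented by its exponent vector. *)
Definition mon (m : nat) := {ffun 'I_m.+1 -> nat}.

Definition prime_power (q : nat) : Prop :=
  exists p k, prime p /\ 0 < k /\ q = p ^ k.

Definition mon1 (m : nat) (mu : mon m) : Prop := forall i, mu i = 0.

Definition proj_reduced (q m : nat) (mu : mon m) : Prop :=
  mon1 mu \/
  exists k : 'I_m.+1, [/\ 0 < mu k,
      (forall j : 'I_m.+1, k < j -> mu j = 0) &
      (forall i : 'I_m.+1, i < k -> mu i <= q - 1)].

Definition mdeg (m : nat) (mu : mon m) : nat := \sum_(i < m.+1) mu i.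

Definition mdvd (m : nat) (nu mu : mon m) : Prop := forall i, nu i <= mu i.

Definition Delta (q m e : nat) (S : seq (mon m)) (mu : mon m) : Prop :=
  [/\ proj_reduced q mu, mdeg mu = e & forall nu, nu \in S -> ~ mdvd nu mu].

Definition Delta_m (q m e : nat) (S : seq (mon m)) (mu : mon m) : Prop :=
  Delta q e S mu /\ 0 < mu ord_max.

(* index m-1 (meaningful for m >= 1) *)
Definition idx_pred (m : nat) : 'I_m.+1 := inord m.-1.

Definition collapse (m : nat) (mu : mon m) : mon m :=
  [ffun i : 'I_m.+1 => if i == ord_max then 0
                       else if i == idx_pred m then mu (idx_pred m) + mu ord_max
                       else mu i].

(* mu * x_{m-1} / x_m  (only used when the exponent of x_m is positive) *)
Definition shift (m : nat) (mu : mon m) : mon m :=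
  [ffun i : 'I_m.+1 => if i == ord_max then (mu ord_max).-1
                       else if i == idx_pred m then (mu (idx_pred m)).+1
                       else mu i].

Definition phi1 (q m : nat) (S : seq (mon m)) (mu : mon m) : mon m :=
  if (collapse mu \notin S) && ((mu (idx_pred m)).+1 < q) then shift mu else mu.

Definition phi (q m : nat) (S : seq (mon m)) : seq (mon m) :=
  map (phi1 q S) S.

(* Main.v *)
Require Import Defs.
From mathcomp Require Import all_boot.

Lemma le_sum_seq (T : eqType) (f : T -> nat) (s : seq T) x :
  x \in s -> f x <= \sum_(y <- s) f y.
Proof.
elim: s => [|a s IH] //=; rewrite in_cons big_cons => /orP [/eqP -> | H].
  exact: leq_addr.
by apply: leq_trans (IH H) _; apply: leq_addl.
Qed.

Lemma deg_bound (q m : nat) (mu : mon m) :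
  proj_reduced q mu -> 0 < mu ord_max -> mdeg mu <= m * (q - 1) + mu ord_max.
Proof.
move=> [H1|[k [Hk Hj Hi]]] Hm.
  by rewrite H1 in Hm.
have Ek : k = ord_max.
  apply/eqP; case: (ltngtP k (@ord_max m)) => [lt|gt|e]; last by apply/eqP/val_inj.
  - by rewrite (Hj _ lt) in Hm.
  - by move: (ltn_ord k); rewrite ltnS leqNgt gt.
rewrite /mdeg big_ord_recr /= leq_add2r.
apply: leq_trans (_ : \sum_(i < m) (q - 1) <= _).
  apply: leq_sum => i _; apply: Hi; rewrite Ek /=; exact: ltn_ord.
by rewrite sum_nat_const card_ord.
Qed.

Theorem lemma4p6 (q m : nat) (hq : prime_power q) (hm : 0 < m)
  (S : seq (mon m)) (hS : forall mu, mu \in S -> proj_reduced q mu) :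
  exists e0 : nat, forall e : nat, e0 <= e ->
    forall mu : mon m, Delta_m q e S mu -> Delta_m q e (phi q S) mu.
Proof.
exists (m * (q - 1) + \sum_(nu <- S) nu ord_max).+1 => e He mu [[Hp Hd Hn] Hm].
split=> //; split=> // nu' /mapP [nu Hnu ->].
rewrite /phi1; case: ifP => _; last exact: Hn.
move=> Hdv; apply: (Hn nu Hnu) => i.
have Hs := Hdv i; rewrite /shift ffunE in Hs.
case: (eqVneq i ord_max) => [Ei|Ni]; last first.
  rewrite (negbTE Ni) in Hs; move: Hs.
  case: (eqVneq i (idx_pred m)) => [->|Nj] Hs; first exact: ltnW.
  exact: Hs.
rewrite Ei; rewrite Ei eqxx in Hs.
rewrite leqNgt; apply/negP => lt.
have B := deg_bound _ _ _ Hp Hm.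
have C := le_sum_seq _ (fun nu : mon m => nu ord_max) _ _ Hnu.
rewrite Hd in B.
have : e <= m * (q - 1) + \sum_(nu <- S) nu ord_max.
  apply: leq_trans B _; rewrite leq_add2l; apply: leq_trans C; exact: ltnW.
by rewrite leqNgt He.
Qed.
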